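(* Let $(X,d)$ and $(Y,d')$ be proper metric spaces and $\pi:(Y,\varepsilon_{d'})\to(X,\varepsilon_d)$ a continuous coarse equivalence with a continuous quasi-inverse $\varpi$. If $X+_fW$ is a compactification with the coarse Karlsson property, then $Y+_{f^\ast}W$ has the coarse Karlsson property, where $f^\ast(A)=\mathrm{Cl}_W\big(f(\mathrm{Cl}_X(\pi(A)))\big)$ for $A$ closed in $Y$.
   Context: For an admissible map $f$ (from closed sets of $X$ to closed sets of $W$, sending $\emptyset$ to $\emptyset$ and preserving finite unions), $X+_fW$ is $X\sqcup W$ with closed sets the $D$ with $D\cap X$ closed in $X$, $D\cap W$ closed in $W$, $f(D\cap X)\subseteq D$; a compactification means it is compact Hausdorff with $X$ dense. $\varepsilon_d$ is the bounded coarse structure of $d$; coarse maps, closeness and quasi-inverses are in the sense of Roe. $\mathfrak{U}_f$ is the unique uniformity of $X+_fW$; $S$ is $u$-small if $S\times S\subseteq u$. A coarse arc between $x,y$ is a coarse embedding $\lambda:[0,t]\to X$ with $\lambda(0)=x,\lambda(t)=y$. A set $\Upsilon$ of coarse arcs is equicoarse if (1) for every $r>0$ there is $s>0$ with $d(\lambda(a),\lambda(b))<s$ whenever $\lambda\in\Upsilon$, $|a-b|<r$; (2) for every $r>0$ there is $s>0$ with $|a-b|<s$ whenever $\lambda\in\Upsilon$, $d(\lambda(a),\lambda(b))<r$. A compactification $X+_fW$ has the coarse Karlsson property if there is an equicoarse $\Upsilon$ containing an arc between any two points of $X$ such that for every $u\in\mathfrak{U}_f$ there is a bounded $S\subseteq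 X$ with every arc in $\Upsilon$ whose image misses $S$ having $u$-small image. *)

(* Defs.v *)
From HB Require Import structures.
From mathcomp Require Import all_boot all_order all_algebra.
From mathcomp Require Import all_classical all_reals all_analysis.

Set Implicit Arguments.
Unset Strict Implicit.
Unset Printing Implicit Defensive.

Import Order.TTheory GRing.Theory Num.Theory.
Local Open Scope classical_set_scope.
Local Open Scope ring_scope.

Section Defs.
Context {R : realType}.

(* bounded subsets of a metric space (the bounded coarse structure eps_d) *)
Definition mbounded {M : metricType R} (A : set M) : Prop :=
  exists (x0 : M) (r : R), forall a, A a -> mdist x0 a <= r.

Definition proper_metric (M : metricType R) : Prop :=
  forall A : set M, closed A -> mbounded A -> compact A.

Definition coarse_map {M N : metricType R} (g : M -> N) : Prop :=
  (forall B : set N, mbounded B -> mbounded (g @^-1` B)) /\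
  (forall r : R, exists s : R, forall a b : M,
      mdist a b <= r -> mdist (g a) (g b) <= s).

Definition close_maps {M N : metricType R} (g h : M -> N) : Prop :=
  exists c : R, forall a : M, mdist (g a) (h a) <= c.

Definition coarse_equivalence_with {M N : metricType R}
    (g : M -> N) (h : N -> M) : Prop :=
  [/\ coarse_map g, coarse_map h,
      close_maps (g \o h) id & close_maps (h \o g) id].

Variable W : topologicalType.

Definition admissible {M : metricType R} (f : set M -> set W) : Prop :=
  [/\ forall A, closed A -> closed (f A),
      f set0 = set0 &
      forall A B, closed A -> closed B -> f (A `|` B) = f A `|` f B].

Section Sum.
Variables (M : metricType R) (f : set M -> set W).

Definition sum_closed (D : set (M + W)%type) : Prop :=
  [/\ closed (inl @^-1` D), closed (inr @^-1` D) &
      f (inl @^-1` D) `<=` inr @^-1` D].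

Definition sum_open (U : set (M + W)%type) : Prop := sum_closed (~` U).

Definition sum_compact : Prop :=
  forall (I : Type) (U : I -> set (M + W)%type),
    (forall i, sum_open (U i)) -> (forall p, exists i, U i p) ->
    exists F : set I, finite_set F /\ forall p, exists2 i, F i & U i p.

Definition sum_hausdorff : Prop :=
  forall p q : (M + W)%type, p <> q ->
    exists U V, [/\ sum_open U, sum_open V, U p, V q & U `&` V = set0].

Definition sum_dense : Prop :=
  forall D, sum_closed D -> (forall x : M, D (inl x)) -> D = setT.

Definition compactification : Prop :=
  [/\ sum_compact, sum_hausdorff & sum_dense].

(* the (unique) uniformity of the compact Hausdorff space M +_f W:
   the neighbourhoods of the diagonal in the product topology *)
Definition unif (u : set ((M + W) * (M + W))%type) : Prop :=
  exists O : set ((M + W) * (M + W))%type,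
    [/\ O `<=` u, (forall p, O (p, p)) &
        forall a b, O (a, b) -> exists U V,
          [/\ sum_open U, sum_open V, U a, V b &
              forall a' b', U a' -> V b' -> O (a', b')]].

(* an arc is a pair (t, lam) where lam is considered on [0,t] *)
Definition arc_dom (t : R) : set R := [set a | 0 <= a <= t].

Definition arc_image (e : R * (R -> M)) : set M := e.2 @` arc_dom e.1.

Definition coarse_arc (e : R * (R -> M)) : Prop :=
  [/\ 0 <= e.1,
      (forall r : R, exists s : R, forall a b, arc_dom e.1 a -> arc_dom e.1 b ->
          `|a - b| <= r -> mdist (e.2 a) (e.2 b) <= s) &
      (forall r : R, exists s : R, forall a b, arc_dom e.1 a -> arc_dom e.1 b ->
          mdist (e.2 a) (e.2 b) <= r -> `|a - b| <= s)].

Definition arc_between (x y : M) (e : R * (R -> M)) : Prop :=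
  coarse_arc e /\ e.2 0 = x /\ e.2 e.1 = y.

Definition equicoarse (Ups : set (R * (R -> M))) : Prop :=
  (forall r : R, exists s : R, forall e a b, Ups e ->
      arc_dom e.1 a -> arc_dom e.1 b ->
      `|a - b| < r -> mdist (e.2 a) (e.2 b) < s) /\
  (forall r : R, exists s : R, forall e a b, Ups e ->
      arc_dom e.1 a -> arc_dom e.1 b ->
      mdist (e.2 a) (e.2 b) < r -> `|a - b| < s).

Definition usmall (u : set ((M + W) * (M + W))%type) (S : set M) : Prop :=
  forall p q, S p -> S q -> u (inl p, inl q).

Definition coarse_Karlsson : Prop :=
  exists Ups : set (R * (R -> M)),
    [/\ (forall e, Ups e -> coarse_arc e),
        equicoarse Ups,
        (forall x y : M, exists2 e, Ups e & arc_between x y e) &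
        (forall u, unif u -> exists S : set M, mbounded S /\
            forall e, Ups e -> arc_image e `&` S = set0 ->
              usmall u (arc_image e))].

End Sum.

Definition fstar {X Y : metricType R} (f : set X -> set W) (pi : Y -> X)
  (A : set Y) : set W := closure (f (closure (pi @` A))).

End Defs.

(* Main.v *)
Require Import Defs.
From HB Require Import structures.
From mathcomp Require Import all_boot all_order all_algebra.
From mathcomp Require Import all_classical all_reals all_analysis.
From mathcomp Require Import finmap lra.

Import Order.TTheory GRing.Theory Num.Theory.
Local Open Scope classical_set_scope.
Local Open Scope ring_scope.

Set Implicit Arguments.
Unset Strict Implicit.
Unset Printing Implicit Defensive.

Section PT.
Context (T : topologicalType) (x0 : T).
Definition pT : Type := T.
HB.instance Definition _ := Topological.on pT.
HB.instance Definition _ := isPointed.Build pT x0.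
Lemma compact_cover_pt (A : set T) : compact A -> cover_compact A.
Proof. move=> cA. have := @compact_cover pT. move=> E.
have : @compact pT A by []. rewrite E. by []. Qed.
End PT.

Lemma compact_cover_gen (T : topologicalType) (A : set T) : compact A -> cover_compact A.
Proof.
move=> cA I D f fo Af.
have [[a Aa]|A0] := pselect (exists a, A a).
  have := @compact_cover_pt T a A cA I D f fo Af. exact.
exists fset0 => // p Ap; exfalso; apply: A0; by exists p.
Qed.

Section MetricFacts.
Context {R : realType} (M : metricType R).

Lemma ball_interior (x0 x : M) (r : R) : mdist x0 x < r -> (ball x0 r)° x.
Proof.
move=> lt; rewrite /interior.
apply: (@filterS _ _ _ (ball x (r - mdist x0 x))); last first.
  by apply: nbhsx_ballx; rewrite subr_gt0.
move=> y; rewrite !ballEmdist /= => bxy.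
have := metric_triangle x0 x y; lra.
Qed.

Lemma closure_near (A : set M) (x : M) (e : R) : closure A x -> 0 < e ->
  exists a, A a /\ mdist x a < e.
Proof.
move=> cl e0; have [a [Aa ba]] := cl _ (nbhsx_ballx x _ e0).
by exists a; split => //; move: ba; rewrite ballEmdist.
Qed.

Lemma mbounded_setU (A B : set M) : mbounded A -> mbounded B -> mbounded (A `|` B).
Proof.
move=> [a0 [r1 H1]] [b0 [r2 H2]]; exists a0, (Num.max r1 (mdist a0 b0 + r2)).
move=> z [Az|Bz]; rewrite le_max; apply/orP; first by left; exact: H1.
right; have := metric_triangle a0 b0 z; have := H2 z Bz; lra.
Qed.

Lemma mbounded_sub (A B : set M) : A `<=` B -> mbounded B -> mbounded A.
Proof. by move=> AB [x [r H]]; exists x, r => a /AB /H. Qed.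

Lemma min_clamp (a b t : R) : `|Num.min a t - Num.min b t| <= `|a - b|.
Proof.
have h1 := ler_norm (a - b).
have h2 : -(a - b) <= `|a - b| by rewrite -normrN ler_norm.
rewrite ler_norml.
case: (leP a t) => ha; case: (leP b t) => hb;
  rewrite ?(min_l ha) ?(min_r (ltW ha)) ?(min_l hb) ?(min_r (ltW hb)); apply/andP; split; lra.
Qed.

End MetricFacts.

Lemma cl_closed (T : topologicalType) (A : set T) : closed (closure A).
Proof. exact: closed_closure. Qed.

Section ArcFacts.
Context {R : realType}.

Lemma eqc_arc (M : metricType R) (U : set (R * (R -> M))) e :
  equicoarse U -> U e -> 0 <= e.1 -> coarse_arc e.
Proof.
move=> [eq1 eq2] Ue t0; split => // r.
- have [s Hs] := eq1 (r + 1); exists s => a b da db ab.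
  by apply: ltW; apply: Hs => //; lra.
- have [s Hs] := eq2 (r + 1); exists s => a b da db ab.
  by apply: ltW; apply: (Hs e) => //; lra.
Qed.

Lemma dom_min (t a : R) : 0 <= t -> arc_dom (t + 1) a -> arc_dom t (Num.min a t).
Proof.
move=> t0; rewrite /arc_dom /= => /andP [a0 at1].
by apply/andP; split; [rewrite le_min a0 t0 | rewrite ge_min lexx orbT].
Qed.

Lemma min_clamp2 (a b t : R) : a <= t + 1 -> b <= t + 1 ->
  `|a - b| <= `|Num.min a t - Num.min b t| + 2.
Proof.
move=> ha1 hb1.
have h1 := ler_norm (Num.min a t - Num.min b t).
have h2 : -(Num.min a t - Num.min b t) <= `|Num.min a t - Num.min b t|.
  by rewrite -normrN ler_norm.
rewrite ler_norml.
case: (leP a t) => ha; case: (leP b t) => hb;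
  rewrite ?(min_l ha) ?(min_r (ltW ha)) ?(min_l hb) ?(min_r (ltW hb)) in h1 h2 *;
  apply/andP; split; lra.
Qed.

End ArcFacts.

Section Generic.
Context {R : realType} (W : topologicalType) (M : metricType R) (g : set M -> set W).
Hypothesis Hg : admissible g.

Local Notation SC := (sum_closed g).
Local Notation SO := (sum_open g).

Lemma adm_mono (A B : set M) : closed A -> closed B -> A `<=` B -> g A `<=` g B.
Proof.
case: Hg => _ _ HU cA cB AB.
have -> : B = A `|` B by rewrite setUidr.
by rewrite HU //; exact: subsetUl.
Qed.

Lemma sum_closedU D1 D2 : SC D1 -> SC D2 -> SC (D1 `|` D2).
Proof.
case: Hg => _ _ HU [c1 c1' s1] [c2 c2' s2]; split.
- rewrite preimage_setU; exact: closedU.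
- rewrite preimage_setU; exact: closedU.
- rewrite !preimage_setU HU //; exact: setUSS.
Qed.

Lemma sum_openI U V : SO U -> SO V -> SO (U `&` V).
Proof. by rewrite /sum_open setCI; exact: sum_closedU. Qed.

Lemma sum_open_bigcup (I : Type) (P : set I) (U : I -> set (M + W)%type) :
  (forall i, P i -> SO (U i)) -> SO [set p | exists2 i, P i & U i p].
Proof.
move=> HO.
have cl1 : closed (inl @^-1` (~` [set p | exists2 i, P i & U i p])).
  have -> : inl @^-1` (~` [set p | exists2 i, P i & U i p]) =
      \bigcap_(i in P) (inl @^-1` (~` U i)).
    apply/seteqP; split => x /=.
      by move=> H i Pi Ui; apply: H; exists i.
    by move=> H [i Pi Ui]; exact: H i Pi Ui.
  by apply: closed_bigI => i Pi; case: (HO i Pi).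
split => //.
- have -> : inr @^-1` (~` [set p | exists2 i, P i & U i p]) =
      \bigcap_(i in P) (inr @^-1` (~` U i)).
    apply/seteqP; split => x /=.
      by move=> H i Pi Ui; apply: H; exists i.
    by move=> H [i Pi Ui]; exact: H i Pi Ui.
  by apply: closed_bigI => i Pi; case: (HO i Pi).
- move=> w gw [i Pi Ui]; have [c1 _ s] := HO i Pi.
  apply: (s w _ Ui); apply: (adm_mono cl1 c1 _ gw).
  by move=> x /= H Ux; apply: H; exists i.
Qed.

Lemma sum_openT : SO setT.
Proof.
rewrite /sum_open setCT; split.
- by rewrite preimage_set0; exact: closed0.
- by rewrite preimage_set0; exact: closed0.
- by rewrite preimage_set0; case: Hg => _ -> _.
Qed.

Lemma sum_open0 : SO set0.
Proof.
rewrite /sum_open setC0; split; try (rewrite preimage_setT; exact: closedT).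
by [].
Qed.

Lemma sum_open_seqI (I : eqType) (s : seq I) (U : I -> set (M + W)%type) :
  (forall i, SO (U i)) -> SO [set p | forall i, i \in s -> U i p].
Proof.
move=> HO; elim: s => [|a s IH].
  have -> : [set p | forall i, i \in [::] -> U i p] = setT.
    by apply/seteqP; split => // p _ i.
  exact: sum_openT.
have -> : [set p | forall i, i \in a :: s -> U i p] =
    U a `&` [set p | forall i, i \in s -> U i p].
  apply/seteqP; split => p /=.
    move=> H; split; first by apply: H; rewrite in_cons eqxx.
    by move=> i iS; apply: H; rewrite in_cons iS orbT.
  by move=> [Ua H] i; rewrite in_cons => /orP [/eqP -> //|]; exact: H.
exact: sum_openI.
Qed.

Lemma sum_open_inl (O : set M) : open O ->
  SO [set p | if p is inl x then O x else False].
Proof.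
move=> oO; split.
- have -> : inl @^-1` (~` [set p : (M + W)%type | if p is inl x then O x else False]) = ~` O.
    by apply/seteqP; split => x.
  exact: open_closedC.
- have -> : inr @^-1` (~` [set p : (M + W)%type | if p is inl x then O x else False]) = setT.
    by apply/seteqP; split => x // _ [].
  exact: closedT.
- by move=> w _ [].
Qed.

Lemma sum_open_inlP U : SO U -> open (inl @^-1` U).
Proof.
case=> c _ _; rewrite -closedC; by rewrite preimage_setC.
Qed.

Lemma sum_open_inrP U : SO U -> open (inr @^-1` U).
Proof.
case=> _ c _; rewrite -closedC; by rewrite preimage_setC.
Qed.

Lemma sum_closed_inl0 (A : set M) : closed A -> g A = set0 ->
  SC [set p | if p is inl x then A x else False].
Proof.
move=> cA gA; split.
- exact: cA.
- have -> : inr @^-1` [set p : (M + W)%type | if p is inl x then A x else False] = set0.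
    by apply/seteqP; split => x.
  exact: closed0.
- by move=> w; rewrite /= gA.
Qed.

Definition fincov (C : set (M + W)%type) :=
  forall h : (M + W)%type -> set (M + W)%type, (forall q, SO (h q)) ->
    (forall q, C q -> h q q) ->
    exists s : seq (M + W)%type, C `<=` [set z | exists2 q, q \in s & h q z].

Lemma sum_sep : sum_hausdorff g -> forall p C, fincov C -> ~ C p ->
  exists N G, [/\ SO N, SO G, N p, C `<=` G & forall z, N z -> G z -> False].
Proof.
move=> HH p C HC Cp.
have : forall q, exists UV : set (M + W)%type * set (M + W)%type,
    [/\ SO UV.1, SO UV.2, UV.1 p &
        (q <> p -> UV.2 q /\ forall z, UV.1 z -> UV.2 z -> False)].
  move=> q; have [->|qp] := pselect (q = p).
    by exists (setT, setT); split => //; exact: sum_openT.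
  have [U [V [oU oV Up Vq UV0]]] := HH p q (fun e => qp (esym e)).
  exists (U, V); split => // _; split => // z Uz Vz.
  have : (U `&` V) z by split.
  by rewrite UV0.
case/choice => h Hh.
have o1 : forall q, SO ((fun q => if pselect (q = p) then set0 else (h q).2) q).
  move=> q; rewrite /=; destruct (pselect (q = p)); first exact: sum_open0.
  by case: (Hh q).
have o2 : forall q, C q -> (fun q => if pselect (q = p) then set0 else (h q).2) q q.
  move=> q Cq; rewrite /=; destruct (pselect (q = p)) as [e|ne]; first by subst; contradiction.
  by case: (Hh q) => _ _ _ /(_ ne) [].
have [s Hs] := HC _ o1 o2.
exists [set z | forall q, q \in s -> (h q).1 z].
exists [set z | exists2 q, q \in s & (if pselect (q = p) then set0 else (h q).2) z].
split.
- by apply: sum_open_seqI => q; case: (Hh q).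
- by apply: (@sum_open_bigcup _ (fun q => q \in s)) => q _; apply: o1.
- by move=> q _; case: (Hh q).
- exact: Hs.
- move=> z Nz [q qs]; destruct (pselect (q = p)) as [e|ne] => // Vz.
  have [_ _ _ /(_ ne) [_ dis]] := Hh q.
  exact: dis z (Nz q qs) Vz.
Qed.

Lemma closed_fincov : sum_compact g -> forall C, SC C -> fincov C.
Proof.
move=> Hc C sC h oh hC.
have o1 : forall i, SO ((fun i => if i is Some q then h q else ~` C) i).
  case => [q|]; first exact: oh.
  by rewrite /sum_open setCK.
have o2 : forall z, exists i, (fun i => if i is Some q then h q else ~` C) i z.
  move=> z; have [Cz|nCz] := pselect (C z).
    by exists (Some z); apply: hC.
  by exists None.
have [F [fF cov]] := Hc _ _ o1 o2.
have fF' : finite_set (Some @^-1` F).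
  by apply: finite_preimage => //; move=> a b _ _ [].
have [B EB] := finite_fsetP.1 fF'.
exists (enum_fset B).
move=> z Cz; have [i Fi Ui] := cov z.
case: i Fi Ui => [q|] Fi Ui; last by [].
exists q => //.
have : (Some @^-1` F) q by [].
by rewrite EB.
Qed.

Lemma compact_fincov (A : set M) : compact A ->
  fincov [set p | if p is inl x then A x else False].
Proof.
move=> cA h oh hA.
have o1 : forall a, A a -> open ((fun a => inl @^-1` (h (inl a))) a).
  move=> a _; exact: sum_open_inlP (oh (inl a)).
have o2 : A `<=` cover A (fun a => inl @^-1` (h (inl a))).
  by move=> a Aa; exists a => //; exact: (hA (inl a) Aa).
have [D' _ cov] := @compact_cover_gen _ A cA M A _ o1 o2.
exists [seq inl a | a <- enum_fset D'].
case=> // a Aa; have [b Db hb] := cov a Aa.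
exists (inl b) => //.
by apply: map_f.
Qed.

Lemma g_compact0 : sum_hausdorff g -> forall A, compact A -> g A = set0.
Proof.
move=> HH A cA; apply/seteqP; split => // w gw.
have [N [G [oN oG Nw AG NG]]] := @sum_sep HH (inr w) _ (compact_fincov cA) (fun x => x).
case: (oN) => c1 c2 s.
have sub : A `<=` inl @^-1` (~` N) by move=> a Aa Na; exact: NG _ Na (AG (inl a) Aa).
have cA' : closed A := compact_closed (@metric_hausdorff _ M) cA.
by have := s w (adm_mono cA' c1 sub gw); apply.
Qed.

Lemma g0_bounded : sum_compact g -> forall (x0 : M) A, closed A -> g A = set0 ->
  mbounded A.
Proof.
move=> Hc x0 A cA gA.
have sC := sum_closed_inl0 cA gA.
pose rad (q : (M + W)%type) := if q is inl x then mdist x0 x + 1 else 0.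
pose hh := (fun q => [set p : (M + W)%type | if p is inl z then (ball x0 (rad q))° z else False]).
have o1 : forall q, SO (hh q).
  move=> q; apply: sum_open_inl; exact: open_interior.
have o2 : forall q, [set p | if p is inl x then A x else False] q -> hh q q.
  case => // x Ax /=; apply: ball_interior; rewrite /rad; lra.
have [s Hs] := @closed_fincov Hc _ sC hh o1 o2.
have [B HB] : exists B, forall q, q \in s -> rad q <= B.
  elim: s {Hs} => [|q s [B HB]]; first by exists 0.
  exists (Num.max (rad q) B) => q'; rewrite in_cons => /orP [/eqP ->|/HB h].
    by rewrite le_max lexx.
  by rewrite le_max h orbT.
exists x0, B => a Aa.
have [q qs ha] := Hs (inl a) Aa.
have := interior_subset ha; rewrite ballEmdist /= => lt.
exact: le_trans (ltW lt) (HB q qs).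
Qed.

End Generic.

Section Main.
Context {R : realType} (X Y : metricType R) (W : topologicalType)
  (f : set X -> set W) (pi : Y -> X) (varpi : X -> Y).
Hypotheses (pX : proper_metric X) (pY : proper_metric Y)
  (cpi : continuous pi) (cvarpi : continuous varpi)
  (ce : coarse_equivalence_with pi varpi) (af : admissible f)
  (cf : compactification f).
Variable (Ups : set (R * (R -> X))).
Hypotheses (Uarc : forall e, Ups e -> coarse_arc e) (Ueq : equicoarse Ups)
  (Ubetw : forall x y : X, exists2 e, Ups e & arc_between x y e)
  (Usmall : forall u, unif f u -> exists S : set X, mbounded S /\
            forall e, Ups e -> arc_image e `&` S = set0 -> usmall u (arc_image e)).
Variable (x0 : X).

Local Notation fs := (fstar f pi).

Lemma adm_fstar : admissible fs.
Proof.
case: af => cl f0 fU; split.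
- by move=> A _; exact: closed_closure.
- by rewrite /fstar image_set0 closure0 f0 closure0.
- move=> A B _ _; rewrite /fstar image_setU closureU fU; try exact: closed_closure.
  by rewrite closureU.
Qed.

Lemma coarse_inv (A B : set X) (k : R) : closed A -> closed B ->
  (forall a, A a -> exists b, B b /\ mdist a b <= k) -> f A `<=` f B.
Proof.
move=> cA cB HAB w fAw; apply: contrapT => nfBw.
case: cf => Hc HH Hd.
pose E : set (X + W)%type := [set p | match p with inl x => B x | inr v => f B v end].
have sE : sum_closed f E.
  have E1 : inl @^-1` E = B by apply/seteqP; split.
  have E2 : inr @^-1` E = f B by apply/seteqP; split.
  split; rewrite ?E1 ?E2 //.
  by case: af => + _ _; apply.
have [N [G [oN oG Nw EG NG]]] := @sum_sep _ _ _ _ af HH (inr w) E (closed_fincov Hc sE) nfBw.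
pose O : set ((X + W) * (X + W))%type :=
  [set P | (~ E P.1 /\ ~ E P.2) \/ (G P.1 /\ G P.2)].
have uO : unif f O.
  exists O; split => //.
  - move=> p; have [Ep|nEp] := pselect (E p).
      by right; split; exact: EG.
    by left; split.
  - move=> a b [[na nb]|[ga gb]].
      exists (~` E), (~` E); split => //; first by rewrite /sum_open setCK.
        by rewrite /sum_open setCK.
      by move=> a' b' ? ?; left; split.
    exists G, G; split => //.
    by move=> a' b' ? ?; right; split.
case: Ueq => eq1 eq2.
have [S [[x1 [RR HS]] Hsm]] := Usmall uO.
have [s Hs] := eq2 (k + 1).
have [s' Hs'] := eq1 s.
have [a [Aa Na Fa]] : exists a, [/\ A a, N (inl a) & RR + s' < mdist x1 a].
  apply: contrapT => Hno.
  pose A2 := A `&` (inl @^-1` (~` N)).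
  pose A1 := A `&` closure (ball x1 (RR + s' + 1)).
  have cA2 : closed A2 by rewrite /A2; apply: closedI => //; case: oN.
  have cA1 : closed A1 by rewrite /A1; apply: closedI => //; exact: closed_closure.
  have bA1 : mbounded A1.
    exists x1, (RR + s' + 2) => z [_ clz].
    have [y [byy dy]] := closure_near clz ltr01.
    move: byy; rewrite ballEmdist /= => byy.
    have := metric_triangle x1 y z; rewrite (metric_sym y z); lra.
  have fA1 : f A1 = set0 := g_compact0 af HH (pX cA1 bA1).
  have sub : A `<=` A1 `|` A2.
    move=> z Az; have [Nz|nNz] := pselect (N (inl z)).
      left; split => //; apply: subset_closure; rewrite ballEmdist /=.
      have h2 : mdist x1 z <= RR + s'.
        by rewrite leNgt; apply/negP => h3; apply: Hno; exists z; split.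
      lra.
    by right; split.
  have := adm_mono af cA (closedU cA1 cA2) sub fAw.
  case: af => _ _ HU; rewrite HU // fA1 set0U => fA2w.
  case: oN => c _ sN.
  by have := sN w (adm_mono af cA2 c (fun z (h : A2 z) => proj2 h) fA2w); apply.
have [b [Bb dab]] := HAB a Aa.
have [e Ue [arc [e0 et]]] := Ubetw a b.
have t0 : 0 <= e.1 by case: arc.
have dom0 : arc_dom e.1 0 by rewrite /arc_dom /= lexx t0.
have domt : arc_dom e.1 e.1 by rewrite /arc_dom /= lexx t0.
have ts : `|0 - e.1| < s.
  apply: (Hs e) => //; rewrite e0 et; lra.
have miss : arc_image e `&` S = set0.
  apply/seteqP; split => // z [[x dx <-] Sz].
  move: (dx); rewrite /arc_dom /= => /andP [x0' xt].
  have hz := Hs' e 0 x Ue dom0 dx.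
  rewrite e0 in hz.
  have : mdist a (e.2 x) < s'.
    apply: hz; move: ts; rewrite !sub0r !normrN !ger0_norm //; lra.
  have := HS _ Sz.
  have := metric_triangle x1 (e.2 x) a; rewrite (metric_sym (e.2 x) a); lra.
have sm := Hsm e Ue miss.
have Ia : arc_image e a by exists 0.
have Ib : arc_image e b by exists e.1.
case: (sm a b Ia Ib) => [[_ nEb]|[Ga _]]; first exact: nEb.
exact: NG _ Na Ga.
Qed.


Definition Psi (p : (X + W)%type) : (Y + W)%type :=
  match p with inl x => inl (varpi x) | inr w => inr w end.
Definition Phi (p : (Y + W)%type) : (X + W)%type :=
  match p with inl y => inl (pi y) | inr w => inr w end.

Lemma Psi_open U : sum_open fs U -> sum_open f (Psi @^-1` U).
Proof.
case=> c1 c2 s; rewrite /sum_open preimage_setC.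
case: ce => _ _ [k Hk] _.
have cl : closed (varpi @^-1` (inl @^-1` (~` U))).
  exact: (continuous_closedP _).1 cvarpi _ c1.
split.
- exact: cl.
- exact: c2.
- have HAB : forall a, (varpi @^-1` (inl @^-1` (~` U))) a ->
      exists b, closure (pi @` (inl @^-1` (~` U))) b /\ mdist a b <= k.
    move=> a Aa; exists (pi (varpi a)); split.
      by apply: subset_closure; exists (varpi a).
    by rewrite metric_sym; exact: Hk a.
  have := coarse_inv cl (@cl_closed _ _) HAB.
  move=> sub w fw; apply: s; rewrite /fstar; apply: subset_closure.
  exact: sub.
Qed.

Lemma Phi_open U : sum_open f U -> sum_open fs (Phi @^-1` U).
Proof.
case=> c1 c2 s; rewrite /sum_open preimage_setC.
have cl : closed (pi @^-1` (inl @^-1` (~` U))).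
  exact: (continuous_closedP _).1 cpi _ c1.
split.
- exact: cl.
- exact: c2.
- rewrite /fstar.
  have sub : closure (pi @` (pi @^-1` (inl @^-1` (~` U)))) `<=` inl @^-1` (~` U).
    move=> x /(closureS (@image_preimage_subset _ _ pi _)); exact: c1.
  have sub2 := adm_mono af (@cl_closed _ _) c1 sub.
  move=> w /(closureS (subset_trans sub2 s)); exact: c2.
Qed.

Lemma fs_bounded (D : set (Y + W)%type) : sum_closed fs D ->
  (forall w, ~ D (inr w)) -> mbounded (inl @^-1` D).
Proof.
case=> c1 c2 s nW.
case: cf => Hc _ _.
have fs0 : f (closure (pi @` (inl @^-1` D))) = set0.
  apply/seteqP; split => // w fw; apply: (nW w); apply: s.
  by rewrite /fstar; exact: subset_closure.
have bd := g0_bounded Hc x0 (@cl_closed _ _) fs0.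
case: ce => [[pip _] _ _ _].
have [y1 [r' Hr']] := pip _ bd.
exists y1, r' => y Ay; apply: Hr'; apply: subset_closure; by exists y.
Qed.

Lemma fs_compact : sum_compact fs.
Proof.
move=> I U oU cov.
case: cf => Hc HH Hd.
pose V := fun j : option I => if j is Some i then Psi @^-1` (U i)
  else [set p : (X + W)%type | if p is inl x then setT x else False].
have o1 : forall j, sum_open f (V j).
  case => [i|]; first exact: Psi_open.
  by apply: sum_open_inl; exact: openT.
have o2 : forall p, exists j, V j p.
  case => [x|w]; first by exists None.
  have [i Ui] := cov (inr w); by exists (Some i).
have [F [fF covF]] := Hc _ _ o1 o2.
pose Un := [set p | exists2 i, F (Some i) & U i p].
have oUn : sum_open fs Un.
  by apply: (sum_open_bigcup adm_fstar) => i _; exact: oU.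
have WUn : forall w, Un (inr w).
  move=> w; have [j Fj Uj] := covF (inr w).
  by case: j Fj Uj => [i|] //= Fi Ui; exists i.
pose K := inl @^-1` (~` Un).
have cK : closed K by case: oUn.
have bK : mbounded K.
  by apply: fs_bounded => // w; apply; exact: WUn.
have kK : compact K := pY cK bK.
have [h Hh] : {h : Y -> I & forall y, U (h y) (inl y)}.
  exact: (choice (fun y => cov (inl y))).
have q1 : forall y, K y -> open ((fun y => inl @^-1` (U (h y))) y).
  move=> y _; exact: sum_open_inlP (oU (h y)).
have q2 : K `<=` cover K (fun y => inl @^-1` (U (h y))).
  by move=> y Ky; exists y => //; exact: Hh y.
have [D' _ covD] := @compact_cover_gen _ K kK Y K _ q1 q2.
exists ([set i | F (Some i)] `|` h @` [set` D']); split.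
- rewrite finite_setU; split.
    by apply: (@finite_preimage _ _ F Some) => // a b _ _ [].
  by apply: finite_image; exact: finite_fset.
- case => [y|w].
    have [Uy|nUy] := pselect (Un (inl y)).
      by case: Uy => i Fi Ui; exists i => //; left.
    have [z Dz hz] := covD y nUy.
    by exists (h z) => //; right; exists z.
  by have [i Fi Ui] := WUn w; exists i => //; left.
Qed.

Lemma fs_hausdorff : sum_hausdorff fs.
Proof.
case: cf => Hc HH Hd.
have viaPhi : forall p q, Phi p <> Phi q -> exists U V,
    [/\ sum_open fs U, sum_open fs V, U p, V q & U `&` V = set0].
  move=> p q pq; have [U [V [oU oV Up Vq UV]]] := HH _ _ pq.
  exists (Phi @^-1` U), (Phi @^-1` V); split => //.
  - exact: Phi_open.
  - exact: Phi_open.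
  - apply/seteqP; split => // z [Uz Vz].
    have : (U `&` V) (Phi z) by split.
    by rewrite UV.
case => [y1|w1] [y2|w2] pq; try (apply: viaPhi => //; discriminate).
- have hY := @metric_hausdorff _ Y; rewrite open_hausdorff in hY.
  have ne : y1 != y2 by apply/eqP => e; apply: pq; rewrite e.
  have [[A B] /= [yA yB] [oA oB AB0]] := hY y1 y2 ne.
  exists [set p | if p is inl y then A y else False].
  exists [set p | if p is inl y then B y else False].
  split.
  + exact: sum_open_inl.
  + exact: sum_open_inl.
  + by move: yA; rewrite in_setE.
  + by move: yB; rewrite in_setE.
  + apply/seteqP; split => // [[y|w]] [] //= Ay By.
    have : (A `&` B) y by split.
    by move/eqP: AB0 => ->.
- apply: viaPhi => /= e; apply: pq; by case: e => ->.
Qed.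

Lemma fs_dense : sum_dense fs.
Proof.
case: cf => Hc HH Hd.
move=> D [c1 c2 s] HD.
have Dl : inl @^-1` D = setT by apply/seteqP; split => // y _; exact: HD y.
pose E : set (X + W)%type := [set p | match p with inl _ => True | inr w => f setT w end].
have sE : sum_closed f E.
  have E1 : inl @^-1` E = setT by apply/seteqP; split.
  have E2 : inr @^-1` E = f setT by apply/seteqP; split.
  split.
  - by rewrite E1; exact: (@closedT X).
  - by rewrite E2; case: af => + _ _; apply; exact: (@closedT X).
  - by [].
have HE := Hd E sE (fun x => I).
have fX : f setT = setT.
  apply/seteqP; split => // w _.
  have : E (inr w) by rewrite HE.
  by [].
case: ce => _ _ [k Hk] _.
have HAB : forall a, (setT : set X) a ->
    exists b, closure (pi @` setT) b /\ mdist a b <= k.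
  move=> a _; exists (pi (varpi a)); split.
    by apply: subset_closure; exists (varpi a).
  by rewrite metric_sym; exact: Hk a.
have sub := coarse_inv (@closedT X) (@cl_closed _ _) HAB.
have fY : fs setT = setT.
  apply/seteqP; split => // w _.
  rewrite /fstar; apply: subset_closure; apply: sub; by rewrite fX.
apply/seteqP; split => // [[y|w]] _; first exact: HD.
apply: s; rewrite Dl fY; done.
Qed.

Definition UY (c : R) : set (R * (R -> Y)) :=
  [set e' | exists2 e, Ups e & e'.1 = e.1 + 1 /\
     forall a, arc_dom e'.1 a -> mdist (varpi (e.2 (Num.min a e.1))) (e'.2 a) <= c].

Lemma UY_eq c : equicoarse (UY c).
Proof.
case: Ueq => eq1 eq2; case: ce => [[_ pb] [_ vb] [c1 Hc1] _]; split => r.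
- have [s1 Hs1] := eq1 r; have [s2 Hs2] := vb s1.
  exists (s2 + c + c + 1) => e' a b [e Ue [te Hmu]] da db ab.
  have t0 : 0 <= e.1 by case: (Uarc Ue).
  have da' : arc_dom e.1 (Num.min a e.1) by apply: dom_min => //; rewrite -te.
  have db' : arc_dom e.1 (Num.min b e.1) by apply: dom_min => //; rewrite -te.
  have h1 := Hs1 e _ _ Ue da' db' (le_lt_trans (min_clamp a b e.1) ab).
  have h2 := Hs2 _ _ (ltW h1).
  have ha := Hmu a da; have hb := Hmu b db.
  have := metric_triangle (e'.2 a) (varpi (e.2 (Num.min a e.1))) (e'.2 b).
  have := metric_triangle (varpi (e.2 (Num.min a e.1))) (varpi (e.2 (Num.min b e.1))) (e'.2 b).
  have := metric_sym (e'.2 a) (varpi (e.2 (Num.min a e.1))); lra.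
- have [s3 Hs3] := pb (r + c + c).
  have [s4 Hs4] := eq2 (s3 + c1 + c1 + 1).
  exists (s4 + 2) => e' a b [e Ue [te Hmu]] da db ab.
  have t0 : 0 <= e.1 by case: (Uarc Ue).
  have da' : arc_dom e.1 (Num.min a e.1) by apply: dom_min => //; rewrite -te.
  have db' : arc_dom e.1 (Num.min b e.1) by apply: dom_min => //; rewrite -te.
  have ha := Hmu a da; have hb := Hmu b db.
  set a' := Num.min a e.1 in da' ha *; set b' := Num.min b e.1 in db' hb *.
  have h1 : mdist (varpi (e.2 a')) (varpi (e.2 b')) <= r + c + c.
    have := metric_triangle (varpi (e.2 a')) (e'.2 a) (varpi (e.2 b')).
    have := metric_triangle (e'.2 a) (e'.2 b) (varpi (e.2 b')).
    have := metric_sym (e'.2 b) (varpi (e.2 b')); lra.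
  have h2 := Hs3 _ _ h1.
  have k1 := Hc1 (e.2 a'); have k2 := Hc1 (e.2 b'); rewrite /= in k1 k2.
  have h3 : mdist (e.2 a') (e.2 b') < s3 + c1 + c1 + 1.
    have := metric_triangle (e.2 a') (pi (varpi (e.2 a'))) (e.2 b').
    have := metric_triangle (pi (varpi (e.2 a'))) (pi (varpi (e.2 b'))) (e.2 b').
    have := metric_sym (e.2 a') (pi (varpi (e.2 a'))); lra.
  have h4 := Hs4 e _ _ Ue da' db' h3.
  move: da db; rewrite te /arc_dom /= => /andP [_ ha1] /andP [_ hb1].
  have := min_clamp2 ha1 hb1; rewrite -/a' -/b'; lra.
Qed.

Lemma UY_betw c : (forall y, mdist (varpi (pi y)) y <= c) ->
  forall y1 y2, exists2 e', UY c e' & arc_between y1 y2 e'.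
Proof.
move=> Hc2 y1 y2; have [e Ue [arc [e0 et]]] := Ubetw (pi y1) (pi y2).
have t0 : 0 <= e.1 by case: arc.
pose mu := fun a => if a == 0 then y1 else if a == e.1 + 1 then y2
  else varpi (e.2 (Num.min a e.1)).
have c0 : 0 <= c := le_trans (mdist_ge0 _ _) (Hc2 y1).
have t1 : (e.1 + 1 == 0) = false by apply/eqP; lra.
have UYe : UY c (e.1 + 1, mu).
  exists e => //; split => // a _ /=; rewrite /mu.
  case: eqP => [->|a0]; first by rewrite (min_l t0) e0; exact: Hc2.
  case: eqP => [->|at1].
    by rewrite (@min_r _ _ (e.1 + 1) e.1) ?et; [exact: Hc2|lra].
  by rewrite mdistxx.
exists (e.1 + 1, mu) => //; split.
  by apply: (eqc_arc (UY_eq c) UYe) => /=; lra.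
by rewrite /mu /= eqxx t1 eqxx.
Qed.

Lemma UY_small c : (forall y, mdist (varpi (pi y)) y <= c) ->
  forall u, unif fs u -> exists S : set Y, mbounded S /\
    forall e', UY c e' -> arc_image e' `&` S = set0 -> usmall u (arc_image e').
Proof.
move=> Hc2 uu [OO [Ou Odiag Oloc]].
case: ce => [[pim pb] [vim vb] [c1 Hc1] _].
case: cf => Hc HH Hd.
have c0 : 0 <= c := le_trans (mdist_ge0 _ _) (Hc2 (varpi x0)).
have [s2 Hs2] := vb 2.
have s20 : 0 <= s2.
  apply: le_trans (mdist_ge0 _ _) (Hs2 x0 x0 _); rewrite mdistxx; lra.
pose r := s2 + c + c + c.
pose good (G : set (Y + W)%type) := sum_open fs G /\ exists G0 : set (Y + W)%type,
  [/\ forall p q, G0 p -> G0 q -> OO (p, q), G `<=` G0 &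
      forall y y', G (inl y) -> mdist y y' <= r -> G0 (inl y')].
have goodW : forall w, exists G, good G /\ G (inr w).
  move=> w; have [U [V [oU oV Uw Vw UV]]] := Oloc _ _ (Odiag (inr w)).
  pose G0 := U `&` V.
  have oG0 : sum_open fs G0 := sum_openI adm_fstar oU oV.
  case: (oG0) => cD1 cD2 sD.
  pose DY := inl @^-1` (~` G0).
  pose NB := [set y | exists2 y', DY y' & mdist y y' <= r].
  pose B := closure NB.
  pose E : set (Y + W)%type :=
    [set p | match p with inl y => B y | inr v => fs B v end].
  have sE : sum_closed fs E.
    have E1 : inl @^-1` E = B by apply/seteqP; split.
    have E2 : inr @^-1` E = fs B by apply/seteqP; split.
    split; [rewrite E1; exact: (@cl_closed _ _) | rewrite E2; exact: (@cl_closed _ _) | by []].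
  have [sr Hsr] := pb r.
  have fsB : fs B `<=` fs DY.
    rewrite /fstar; apply: closureS.
    have HAB : forall x, closure (pi @` B) x ->
        exists b, closure (pi @` DY) b /\ mdist x b <= 2 + sr.
      move=> x clx.
      have [a [[z Bz za] dxz]] := closure_near clx ltr01.
      rewrite -za in dxz.
      have nb : nbhs z (pi @^-1` ball (pi z) 1) := cpi (nbhsx_ballx (pi z) _ ltr01).
      have [z' [NBz' bz']] := Bz _ nb.
      case: NBz' => y' DYy' dz'y'.
      exists (pi y'); split; first by apply: subset_closure; exists y'.
      move: bz'; rewrite /= ballEmdist /= => bz'.
      have := Hsr _ _ dz'y'.
      have := metric_triangle x (pi z) (pi y').
      have := metric_triangle (pi z) (pi z') (pi y').
      lra.
    exact: coarse_inv (@cl_closed _ _) (@cl_closed _ _) HAB.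
  exists (G0 `&` ~` E); split; last first.
    split; first by split.
    move=> Ew; have := sD w (fsB w Ew); apply; by split.
  split.
    by apply: (sum_openI adm_fstar oG0); rewrite /sum_open setCK.
  exists G0; split.
  - by move=> p q [Up _] [_ Vq]; exact: UV.
  - by move=> p [].
  - move=> y y' [G0y nEy] dyy'; apply: contrapT => nG0y'; apply: nEy.
    by apply: subset_closure; exists y'.
pose Bx (x : X) : set (X + W)%type :=
  [set p | if p is inl z then (ball x 1)° z else False].
pose u' : set ((X + W) * (X + W))%type :=
  [set P | (exists G, good G /\ G (Psi P.1) /\ G (Psi P.2)) \/
           (exists x, Bx x P.1 /\ Bx x P.2)].
have uu' : unif f u'.
  exists u'; split => //.
  - case => [x|w] /=.
      by right; exists x; split; apply: ball_interior; rewrite mdistxx; exact: ltr01.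
    by left; have [G [gG Gw]] := goodW w; exists G.
  - move=> a b [[G [gG [Ga Gb]]]|[x [Ba Bb]]].
      exists (Psi @^-1` G), (Psi @^-1` G); split => //.
      + exact: Psi_open gG.1.
      + exact: Psi_open gG.1.
      + by move=> a' b' ? ?; left; exists G.
    exists (Bx x), (Bx x); split => //.
    + by apply: sum_open_inl; exact: open_interior.
    + by apply: sum_open_inl; exact: open_interior.
    + by move=> a' b' ? ?; right; exists x.
have [SX [[x1 [R1 HS1]] HsmX]] := Usmall uu'.
pose Un := [set p | exists2 G, good G & G p].
have oUn : sum_open fs Un by apply: (sum_open_bigcup adm_fstar) => G [].
have WUn : forall w, Un (inr w).
  by move=> w; have [G [gG Gw]] := goodW w; exists G.
pose KY := inl @^-1` (~` Un).
have bK : mbounded KY by apply: fs_bounded => // w; apply; exact: WUn.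
pose SY2 := [set y | exists2 x, SX x & mdist (varpi x) y <= c].
have [sR HsR] := vb R1.
have bS2 : mbounded SY2.
  exists (varpi x1), (sR + c) => y [x Sx dxy].
  have := HsR _ _ (HS1 x Sx).
  have := metric_triangle (varpi x1) (varpi x) y; lra.
exists (KY `|` SY2); split; first exact: mbounded_setU.
move=> e' [e Ue [te Hmu]] miss p q [a da <-] [b db <-].
have t0 : 0 <= e.1 by case: (Uarc Ue).
have missX : arc_image e `&` SX = set0.
  apply/seteqP; split => // z [[x dx <-] Sx].
  move: (dx); rewrite /arc_dom /= => /andP [x0' xt].
  have dx' : arc_dom e'.1 x by rewrite te /arc_dom /= x0' /=; lra.
  have hm := Hmu x dx'; rewrite (min_l xt) in hm.
  have : (arc_image e' `&` (KY `|` SY2)) (e'.2 x).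
    by split; [exists x | right; exists (e.2 x)].
  by rewrite miss.
have smX := HsmX e Ue missX.
have da' : arc_dom e.1 (Num.min a e.1) by apply: dom_min => //; rewrite -te.
have db' : arc_dom e.1 (Num.min b e.1) by apply: dom_min => //; rewrite -te.
have ha := Hmu a da; have hb := Hmu b db.
have Ua : Un (inl (e'.2 a)).
  apply: contrapT => nU.
  have : (arc_image e' `&` (KY `|` SY2)) (e'.2 a) by split; [exists a | left].
  by rewrite miss.
set a' := Num.min a e.1 in da' ha *; set b' := Num.min b e.1 in db' hb *.
have Ia : arc_image e (e.2 a') by exists a'.
have Ib : arc_image e (e.2 b') by exists b'.
apply: Ou.
case: (smX _ _ Ia Ib) => [[G [[oG [G0 [HG0 GG0 Gr]]] [Ga Gb]]]|[x [Ba Bb]]].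
  rewrite /= in Ga Gb.
  by apply: HG0; [apply: (Gr _ _ Ga) | apply: (Gr _ _ Gb)]; rewrite /r; lra.
case: Ua => G [oG [G0 [HG0 GG0 Gr]]] Ga.
have d1 : mdist (e.2 a') (e.2 b') <= 2.
  move: Ba Bb => /= /interior_subset Ba /interior_subset Bb.
  move: Ba Bb; rewrite !ballEmdist /= => Ba Bb.
  have := metric_triangle (e.2 a') x (e.2 b').
  have := metric_sym (e.2 a') x; lra.
have := Hs2 _ _ d1 => d2.
apply: HG0; first exact: GG0.
apply: (Gr _ _ Ga).
have := metric_triangle (e'.2 a) (varpi (e.2 a')) (e'.2 b).
have := metric_triangle (varpi (e.2 a')) (varpi (e.2 b')) (e'.2 b).
have := metric_sym (e'.2 a) (varpi (e.2 a')).
rewrite /r; lra.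
Qed.
End Main.

Unset Implicit Arguments.

Theorem mainTheorem17 (R : realType) (X Y : metricType R) (W : topologicalType)
  (f : set X -> set W) (pi : Y -> X) (varpi : X -> Y) :
  proper_metric X -> proper_metric Y ->
  continuous pi -> continuous varpi ->
  coarse_equivalence_with pi varpi ->
  admissible f ->
  compactification f -> coarse_Karlsson f ->
  compactification (fstar f pi) /\ coarse_Karlsson (fstar f pi).
Proof.
move=> pX pY cpi cvarpi ce af cf kf.
case: kf => Ups [Uarc Ueq Ubetw Usmall].
have [x0 _] : exists x0 : X, True.
  have uT : unif f setT.
    exists setT; split => // a b _; exists setT, setT; split => //.
    + exact: sum_openT af.
    + exact: sum_openT af.
  by have [S [[x0 _] _]] := Usmall _ uT; exists x0.
have [_ _ _ [c Hc2]] := ce.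
have Hc2' : forall y, mdist (varpi (pi y)) y <= c by move=> y; exact: Hc2 y.
split.
  split.
  - exact: (fs_compact pX pY cvarpi ce af cf Ueq Ubetw Usmall x0).
  - exact: (fs_hausdorff cpi af cf).
  - exact: (fs_dense pX ce af cf Ueq Ubetw Usmall).
exists (UY varpi Ups c); split.
- move=> e' Ue'; apply: (eqc_arc (UY_eq ce Uarc Ueq c) Ue').
  by case: Ue' => e Ue [-> _]; have [t0 _ _] := Uarc e Ue; lra.
- exact: (UY_eq ce Uarc Ueq c).
- exact: (UY_betw ce Uarc Ueq Ubetw Hc2').
- exact: (UY_small pX cpi cvarpi ce af cf Uarc Ueq Ubetw Usmall x0 Hc2').
Qed.
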